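(* Let $g_1,g_2$ be independent exponential random variables with means $\varepsilon_1,\varepsilon_2>0$. Fix rates $R_d>R_s\ge0$ and $\rho\ge0$, set $SNR=P_s/\sigma^2$, $INR=P_d/\sigma^2=SNR^\rho$. Define the events $$E_o^{\mathrm{AF}}=\Big\{\tfrac12\log_2\!\Big(1+\frac{SNR^2g_1g_2}{SNR\,g_1+(SNR+INR)g_2+1}\Big)<R_d\Big\},\qquad E_l=\Big\{\tfrac12\log_2\!\Big(1+\frac{g_1SNR}{g_2INR+1}\Big)>R_d-R_s\Big\},$$ and $p_t^{\mathrm{AF}}=\Pr(E_o^{\mathrm{AF}}\cup E_l)$. Then $$\limsup_{SNR\to\infty}\frac{-\log p_t^{\mathrm{AF}}}{\log SNR}=\begin{cases}0,&\rho\le1,\\ \rho-1,&1<\rho\le 3/2,\\ 2-\rho,&3/2<\rho\le2,\\ 0,&\rho\ge2.\end{cases}$$ In particular the generalized secure diversity gain of amplify-and-forward is at most $1/2$, attained only at $\rho=3/2$.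
   Context: Amplify-and-forward relaying in the untrusted relay channel without channel state information at the transmitter: $g_i=|h_i|^2$ with $h_i\sim\mathcal{CN}(0,\varepsilon_i)$ independent ($g_1$ source–relay, $g_2$ destination–relay and relay–destination), $P_s$ source/relay power, $P_d$ destination artificial-noise power, $\sigma^2$ noise variance, $R_d$ total rate, $R_s$ confidential rate. $E_o^{\mathrm{AF}}$ is connection outage at the destination and $E_l$ secrecy outage at the relay. The generalized secure diversity gain is $\limsup_{SNR\to\infty}(-\log p_t)/\log SNR$ with $INR=SNR^\rho$. *)

(* Defs.v *)
From Stdlib Require Import Reals Lra.
Open Scope R_scope.

Definition Rltb (x y : R) : bool := if Rlt_dec x y then true else false.

Definition log2 (x : R) : R := ln x / ln 2.

Definition exp_pdf (eps x : R) : R := / eps * exp (- x / eps).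

Definition int_0_inf (f : R -> R) (l : R) : Prop :=
  exists pr : forall M : R, Riemann_integrable f 0 M,
    forall e : R, 0 < e -> exists M0 : R, forall M : R, M0 <= M ->
      Rabs (RiemannInt (pr M) - l) < e.

Definition EoAF (Rd snr inr g1 g2 : R) : bool :=
  Rltb (/ 2 * log2 (1 + snr ^ 2 * g1 * g2 / (snr * g1 + (snr + inr) * g2 + 1))) Rd.

Definition El (Rd Rs snr inr g1 g2 : R) : bool :=
  Rltb (Rd - Rs) (/ 2 * log2 (1 + g1 * snr / (g2 * inr + 1))).

Definition ind_union (Rd Rs snr inr g1 g2 : R) : R :=
  if (EoAF Rd snr inr g1 g2 || El Rd Rs snr inr g1 g2)%bool then 1 else 0.

(* p = Pr(E_o^AF \/ E_l) for g1 ~ Exp(mean e1), g2 ~ Exp(mean e2) independent,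
   computed as the iterated integral of the product density over the event. *)
Definition ProbAF (e1 e2 Rd Rs snr inr p : R) : Prop :=
  exists s : R -> R,
    (forall y, 0 <= y ->
       int_0_inf (fun x => exp_pdf e1 x * ind_union Rd Rs snr inr x y) (s y)) /\
    int_0_inf (fun y => exp_pdf e2 y * s y) p.

Definition limsup_infty (h : R -> R) (L : R) : Prop :=
  forall e : R, 0 < e ->
    (exists X : R, forall x : R, X < x -> h x < L + e) /\
    (forall X : R, exists x : R, X < x /\ L - e < h x).

Definition sdg_AF (rho : R) : R :=
  if Rle_dec rho 1 then 0
  else if Rle_dec rho (3 / 2) then rho - 1
  else if Rle_dec rho 2 then 2 - rho
  else 0.

(* Main.v *)
Require Import Defs.
From Stdlib Require Import Reals Lra Psatz List ClassicalEpsilon.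
From Coquelicot Require Import Coquelicot.
Open Scope R_scope.

Definition goodf (f : R -> R) := forall u v, ex_RInt f u v.

Lemma int_0_inf_unique f l1 l2 : int_0_inf f l1 -> int_0_inf f l2 -> l1 = l2.
Proof.
  intros [pr1 H1] [pr2 H2].
  destruct (Req_dec l1 l2) as [|Hne]; auto.
  set (e := Rabs (l1 - l2) / 2).
  assert (He : 0 < e).
  { unfold e. assert (0 < Rabs (l1 - l2)) by (apply Rabs_pos_lt; lra). lra. }
  destruct (H1 e He) as [M1 HM1]. destruct (H2 e He) as [M2 HM2].
  specialize (HM1 (Rmax M1 M2) (Rmax_l _ _)).
  specialize (HM2 (Rmax M1 M2) (Rmax_r _ _)).
  rewrite (RiemannInt_P5 (pr2 _) (pr1 _)) in HM2.
  exfalso. unfold e in *.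
  set (r := RiemannInt (pr1 (Rmax M1 M2))) in *.
  assert (Rabs (l1 - l2) <= Rabs (r - l1) + Rabs (r - l2)).
  { replace (l1 - l2) with (-(r - l1) + (r - l2)) by ring.
    eapply Rle_trans; [apply Rabs_triang|]. rewrite Rabs_Ropp. lra. }
  lra.
Qed.

Lemma int_0_inf_le f g l m :
  int_0_inf f l -> int_0_inf g m -> (forall x, 0 < x -> f x <= g x) -> l <= m.
Proof.
  intros [pr1 H1] [pr2 H2] Hfg.
  apply Rnot_lt_le; intro Hlt.
  set (e := (l - m) / 2).
  assert (He : 0 < e) by (unfold e; lra).
  destruct (H1 e He) as [M1 HM1]. destruct (H2 e He) as [M2 HM2].
  set (M := Rmax 0 (Rmax M1 M2)).
  assert (HM1' : M1 <= M) by (unfold M; eapply Rle_trans; [apply Rmax_l|apply Rmax_r]).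
  assert (HM2' : M2 <= M) by (unfold M; eapply Rle_trans; [apply Rmax_r|apply Rmax_r]).
  assert (H0 : 0 <= M) by apply Rmax_l.
  specialize (HM1 M HM1'). specialize (HM2 M HM2').
  assert (RiemannInt (pr1 M) <= RiemannInt (pr2 M)).
  { rewrite <- !RInt_Reals. apply RInt_le; auto.
    - apply ex_RInt_Reals_1, pr1.
    - apply ex_RInt_Reals_1, pr2.
    - intros x Hx; apply Hfg; lra. }
  apply Rabs_def2 in HM1. apply Rabs_def2 in HM2. unfold e in *. lra.
Qed.

Lemma int_0_inf_plus f g l m :
  int_0_inf f l -> int_0_inf g m -> int_0_inf (fun x => f x + g x) (l + m).
Proof.
  intros [pr1 H1] [pr2 H2].
  exists (fun M => Riemann_integrable_plus _ _ _ _ (pr1 M) (pr2 M)).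
  intros e He.
  destruct (H1 (e/2) ltac:(lra)) as [M1 HM1]. destruct (H2 (e/2) ltac:(lra)) as [M2 HM2].
  exists (Rmax M1 M2). intros M HM.
  specialize (HM1 M (Rle_trans _ _ _ (Rmax_l _ _) HM)).
  specialize (HM2 M (Rle_trans _ _ _ (Rmax_r _ _) HM)).
  rewrite <- RInt_Reals. rewrite (RInt_plus f g).
  2: apply ex_RInt_Reals_1, pr1. 2: apply ex_RInt_Reals_1, pr2.
  rewrite !(RInt_Reals _ _ _ (pr1 M)), !(RInt_Reals _ _ _ (pr2 M)).
  unfold plus; simpl.
  apply Rabs_def2 in HM1. apply Rabs_def2 in HM2. apply Rabs_def1; lra.
Qed.

Lemma int_0_inf_closed f l k lam M1 :
  goodf f -> 0 < lam ->
  (forall M, M1 <= M -> RInt f 0 M = l - k * exp (- (lam * M))) ->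
  int_0_inf f l.
Proof.
  intros Hg Hl HR.
  exists (fun M => ex_RInt_Reals_0 _ _ _ (Hg 0 M)).
  intros e He.
  exists (Rmax 1 (Rmax M1 ((Rabs k + 1) / (lam * e)))).
  intros M HM.
  assert (H1 : 1 <= M) by (eapply Rle_trans; [apply Rmax_l|exact HM]).
  assert (H2 : M1 <= M) by (eapply Rle_trans; [|exact HM]; eapply Rle_trans; [apply Rmax_l|apply Rmax_r]).
  assert (H3 : (Rabs k + 1) / (lam * e) <= M) by (eapply Rle_trans; [|exact HM]; eapply Rle_trans; [apply Rmax_r|apply Rmax_r]).
  rewrite <- RInt_Reals. rewrite HR by auto.
  replace (l - k * exp (- (lam * M)) - l) with (- (k * exp (- (lam * M)))) by ring.
  rewrite Rabs_Ropp, Rabs_mult, (Rabs_right (exp _)) by (left; apply exp_pos).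
  assert (Hex : lam * M < exp (lam * M)).
  { assert (1 + lam * M < exp (lam * M)) by (apply exp_ineq1; nra). lra. }
  rewrite exp_Ropp.
  assert (0 < lam * M) by nra.
  assert (Hk : Rabs k * / exp (lam * M) <= Rabs k * / (lam * M)).
  { apply Rmult_le_compat_l; [apply Rabs_pos|]. apply Rinv_le_contravar; lra. }
  assert (Rabs k * / (lam * M) < e).
  { apply (Rmult_le_compat_l (lam * e)) in H3; [|nra].
    replace (lam * e * ((Rabs k + 1) / (lam * e))) with (Rabs k + 1) in H3 by (field; lra).
    apply (Rmult_lt_reg_r (lam * M)); auto.
    rewrite Rmult_assoc, Rinv_l by lra. nra. }
  lra.
Qed.

Lemma RInt_mono_pos f a b :
  goodf f -> (forall x, 0 < x -> 0 <= f x) -> 0 <= a <= b -> RInt f 0 a <= RInt f 0 b.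
Proof.
  intros Hg Hp Hab.
  rewrite <- (RInt_Chasles f 0 a b) by auto. unfold plus; simpl.
  assert (0 <= RInt f a b) by (apply RInt_ge_0; [lra|auto|intros; apply Hp; lra]).
  lra.
Qed.

Lemma int_0_inf_lub f K :
  goodf f -> (forall x, 0 < x -> 0 <= f x) -> (forall M, 0 <= M -> RInt f 0 M <= K) ->
  exists l, int_0_inf f l.
Proof.
  intros Hg Hp HK.
  set (E := fun r => exists M, 0 <= M /\ r = RInt f 0 M).
  destruct (completeness E) as [l [Hub Hlub]].
  { exists K. intros r [M [HM ->]]. auto. }
  { exists (RInt f 0 0). exists 0. split; [lra|auto]. }
  exists l.
  exists (fun M => ex_RInt_Reals_0 _ _ _ (Hg 0 M)).
  intros e He.
  assert (exists M0, 0 <= M0 /\ l - e < RInt f 0 M0) as [M0 [HM0 HM0']].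
  { apply Classical_Prop.NNPP; intro Hn.
    assert (is_upper_bound E (l - e)).
    { intros r [M [HM ->]]. apply Rnot_lt_le. intro. apply Hn. eauto. }
    specialize (Hlub _ H). lra. }
  exists M0. intros M HM.
  rewrite <- RInt_Reals.
  assert (RInt f 0 M <= l) by (apply Hub; exists M; split; auto; lra).
  assert (RInt f 0 M0 <= RInt f 0 M) by (apply RInt_mono_pos; auto; lra).
  apply Rabs_def1; lra.
Qed.
Definition expf (k lam y : R) := k * exp (- (lam * y)).

Lemma goodf_cont f : (forall x, continuous f x) -> goodf f.
Proof. intros H u v. apply (ex_RInt_continuous (V:=R_CompleteNormedModule)). intros; apply H. Qed.

Lemma expf_cont k lam x : continuous (expf k lam) x.
Proof. apply (ex_derive_continuous (V:=R_NormedModule)). unfold expf. auto_derive. auto. Qed.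

Lemma RInt_expf k lam p q : lam <> 0 ->
  RInt (expf k lam) p q = k / lam * (exp (- (lam * p)) - exp (- (lam * q))).
Proof.
  intros Hl. apply is_RInt_unique.
  replace (k / lam * (exp (- (lam * p)) - exp (- (lam * q)))) with
    (minus ((fun y => - k / lam * exp (- (lam * y))) q) ((fun y => - k / lam * exp (- (lam * y))) p))
    by (unfold minus, plus, opp; simpl; field; auto).
  apply (is_RInt_derive (V:=R_CompleteNormedModule) (fun y => - k / lam * exp (- (lam * y)))).
  - intros x _. unfold expf. auto_derive; auto. field. auto.
  - intros x _. apply expf_cont.
Qed.

Definition cnt (u v : R) (L : list R) : nat :=
  length (filter (fun p => if Rlt_dec u p then if Rlt_dec p v then true else false else false) L).

Lemma cnt_sub u v u' v' L : u <= u' -> v' <= v -> (cnt u' v' L <= cnt u v L)%nat.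
Proof.
  intros H1 H2. induction L as [|p L IH]; simpl; auto.
  unfold cnt in *; simpl.
  destruct (Rlt_dec u' p); destruct (Rlt_dec p v'); destruct (Rlt_dec u p); destruct (Rlt_dec p v);
    simpl; try lia; lra.
Qed.

Lemma cnt_split_l u v p L : u < p < v -> In p L -> (cnt u p L < cnt u v L)%nat.
Proof.
  intros Hp. induction L as [|q L IH]; simpl; [tauto|].
  intros [->|Hin]; unfold cnt in *; simpl.
  - destruct (Rlt_dec u p); [|lra]. destruct (Rlt_dec p p); [lra|].
    destruct (Rlt_dec p v); [|lra]. simpl.
    pose proof (cnt_sub u v u p L ltac:(lra) ltac:(lra)). unfold cnt in H. lia.
  - specialize (IH Hin).
    destruct (Rlt_dec u q); destruct (Rlt_dec q p); destruct (Rlt_dec q v); simpl; try lia; lra.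
Qed.

Lemma cnt_split_r u v p L : u < p < v -> In p L -> (cnt p v L < cnt u v L)%nat.
Proof.
  intros Hp. induction L as [|q L IH]; simpl; [tauto|].
  intros [->|Hin]; unfold cnt in *; simpl.
  - destruct (Rlt_dec u p); [|lra]. destruct (Rlt_dec p p); [lra|].
    destruct (Rlt_dec p v); [|lra]. simpl.
    pose proof (cnt_sub u v p v L ltac:(lra) ltac:(lra)). unfold cnt in H. lia.
  - specialize (IH Hin).
    destruct (Rlt_dec u q); destruct (Rlt_dec p q); destruct (Rlt_dec q v); simpl; try lia; lra.
Qed.

Lemma cnt_zero u v L : cnt u v L = 0%nat -> forall p, In p L -> ~ (u < p < v).
Proof.
  induction L as [|q L IH]; simpl; [tauto|].
  unfold cnt; simpl. intros H p [->|Hin] Hp.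
  - destruct (Rlt_dec u p); [|lra]. destruct (Rlt_dec p v); [|lra]. simpl in H. lia.
  - destruct (Rlt_dec u q); [destruct (Rlt_dec q v)|]; simpl in H; try lia;
    eapply IH; eauto.
Qed.

Lemma cnt_pos u v L : (0 < cnt u v L)%nat -> exists p, In p L /\ u < p < v.
Proof.
  induction L as [|q L IH]; unfold cnt; simpl; [lia|].
  destruct (Rlt_dec u q); [destruct (Rlt_dec q v)|]; simpl; intros H.
  - exists q; auto.
  - destruct IH as [p [? ?]]; [exact H|]. eauto.
  - destruct IH as [p [? ?]]; [exact H|]. eauto.
Qed.

Lemma goodf_pw f L :
  (forall u v, u < v -> (forall p, In p L -> ~ (u < p < v)) ->
     exists g, (forall x, continuous g x) /\ forall x, u < x < v -> f x = g x) ->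
  goodf f.
Proof.
  intros H.
  assert (Hle : forall n u v, u <= v -> (cnt u v L <= n)%nat -> ex_RInt f u v).
  { induction n as [|n IH]; intros u v Huv Hc.
    - destruct (Req_dec u v) as [->|Hne]; [apply ex_RInt_point|].
      destruct (H u v ltac:(lra)) as [g [Hg Hfg]].
      { apply cnt_zero. lia. }
      apply (ex_RInt_ext g). { rewrite Rmin_left, Rmax_right by lra. intros; symmetry; auto. }
      apply (ex_RInt_continuous (V:=R_CompleteNormedModule)); auto.
    - destruct (Nat.eq_dec (cnt u v L) 0) as [H0|H0].
      + apply (IH u v Huv). lia.
      + destruct (cnt_pos u v L) as [p [Hin Hp]]; [lia|].
        apply (ex_RInt_Chasles f u p v).
        * apply IH; [lra|]. pose proof (cnt_split_l u v p L Hp Hin). lia.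
        * apply IH; [lra|]. pose proof (cnt_split_r u v p L Hp Hin). lia. }
  intros u v. destruct (Rle_dec u v).
  - eapply Hle; eauto.
  - apply ex_RInt_swap. eapply Hle; [lra|eauto].
Qed.

Lemma int_expf k lam : 0 < lam -> int_0_inf (expf k lam) (k / lam).
Proof.
  intros Hl. apply (int_0_inf_closed _ _ (k / lam) lam 0).
  - apply goodf_cont, expf_cont.
  - auto.
  - intros M _. rewrite RInt_expf by lra. rewrite Rmult_0_r, Ropp_0, exp_0. rewrite Rmult_minus_distr_l, Rmult_1_r. reflexivity.
Qed.

Lemma ln2_pos : 0 < ln 2.
Proof. rewrite <- ln_1. apply ln_increasing; lra. Qed.

Lemma Rltb_true a b : Rltb a b = true <-> a < b.
Proof. unfold Rltb. destruct (Rlt_dec a b) as [h|h]; split; intro H; try exact h; try reflexivity; try discriminate; contradiction. Qed.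

Lemma ln_nonpos t : t <= 0 -> ln t = 0.
Proof. intros H. unfold ln. destruct (Rlt_dec 0 t); [exfalso; lra|auto]. Qed.

Lemma lt_ln a t : 0 < t -> (a < ln t <-> exp a < t).
Proof.
  intros Ht. split; intros H.
  - rewrite <- (exp_ln t) by auto. apply exp_increasing; auto.
  - rewrite <- (ln_exp a). apply ln_increasing; auto. apply exp_pos.
Qed.

Lemma ln_lt a t : 0 < t -> (ln t < a <-> t < exp a).
Proof.
  intros Ht. split; intros H.
  - rewrite <- (exp_ln t) by auto. apply exp_increasing; auto.
  - rewrite <- (ln_exp a). apply ln_increasing; auto.
Qed.

Definition thr (a : R) := exp (2 * a * ln 2) - 1.

Lemma thr_pos a : 0 < a -> 0 < thr a.
Proof.
  intros Ha. unfold thr. pose proof ln2_pos.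
  assert (1 + 2 * a * ln 2 < exp (2 * a * ln 2)) by (apply exp_ineq1; nra). nra.
Qed.

Lemma gt_half_log2 a w : 0 < a -> (a < / 2 * log2 (1 + w) <-> thr a < w).
Proof.
  intros Ha. pose proof ln2_pos. pose proof (thr_pos a Ha). unfold log2, thr in *.
  assert (E : a < / 2 * (ln (1 + w) / ln 2) <-> 2 * a * ln 2 < ln (1 + w)).
  { split; intros H'.
    - apply (Rmult_lt_compat_r (2 * ln 2)) in H'; [|lra].
      replace (/ 2 * (ln (1 + w) / ln 2) * (2 * ln 2)) with (ln (1 + w)) in H' by (field; lra). lra.
    - apply (Rmult_lt_reg_r (2 * ln 2)); [lra|].
      replace (/ 2 * (ln (1 + w) / ln 2) * (2 * ln 2)) with (ln (1 + w)) by (field; lra). lra. }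
  rewrite E.
  destruct (Rlt_dec 0 (1 + w)).
  - rewrite lt_ln by auto. lra.
  - rewrite (ln_nonpos (1 + w)) by (apply Rnot_lt_le; auto). split; intros; nra.
Qed.

Lemma lt_half_log2 a z : 0 < a -> (/ 2 * log2 (1 + z) < a <-> z < thr a).
Proof.
  intros Ha. pose proof ln2_pos. pose proof (thr_pos a Ha). unfold log2, thr in *.
  assert (E : / 2 * (ln (1 + z) / ln 2) < a <-> ln (1 + z) < 2 * a * ln 2).
  { split; intros H'.
    - apply (Rmult_lt_compat_r (2 * ln 2)) in H'; [|lra].
      replace (/ 2 * (ln (1 + z) / ln 2) * (2 * ln 2)) with (ln (1 + z)) in H' by (field; lra). lra.
    - apply (Rmult_lt_reg_r (2 * ln 2)); [lra|].
      replace (/ 2 * (ln (1 + z) / ln 2) * (2 * ln 2)) with (ln (1 + z)) by (field; lra). lra. }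
  rewrite E.
  destruct (Rlt_dec 0 (1 + z)).
  - rewrite ln_lt by auto. lra.
  - rewrite (ln_nonpos (1 + z)) by (apply Rnot_lt_le; auto). split; intros; nra.
Qed.

Lemma div_gt a d c : 0 < d -> (c < a / d <-> c * d < a).
Proof.
  intros Hd. split; intros H.
  - apply (Rmult_lt_compat_r d) in H; auto. replace (a / d * d) with a in H by (field; lra). auto.
  - apply (Rmult_lt_reg_r d); auto. replace (a / d * d) with a by (field; lra). auto.
Qed.

Lemma div_lt a d c : 0 < d -> (a / d < c <-> a < c * d).
Proof.
  intros Hd. split; intros H.
  - apply (Rmult_lt_compat_r d) in H; auto. replace (a / d * d) with a in H by (field; lra). auto.
  - apply (Rmult_lt_reg_r d); auto. replace (a / d * d) with a by (field; lra). auto.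
Qed.

Lemma El_iff Rd Rs s I x y : Rs < Rd -> 0 < s -> 0 < I -> 0 <= y ->
  El Rd Rs s I x y = true <-> thr (Rd - Rs) * (y * I + 1) / s < x.
Proof.
  intros HR Hs HI Hy. unfold El. rewrite Rltb_true, gt_half_log2 by lra.
  assert (0 < y * I + 1) by nra.
  rewrite div_gt by auto. rewrite div_lt by auto. split; intros; nra.
Qed.

Lemma Eo_iff Rd s I x y : 0 < Rd ->
  EoAF Rd s I x y = true <->
  s ^ 2 * x * y / (s * x + (s + I) * y + 1) < thr Rd.
Proof.
  intros HR. unfold EoAF. rewrite Rltb_true, lt_half_log2 by lra. tauto.
Qed.

Lemma Eo_pos Rd s I x y : 0 < Rd -> 0 < s * x + (s + I) * y + 1 ->
  EoAF Rd s I x y = true <->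
  x * (s * s * y - thr Rd * s) < thr Rd * ((s + I) * y + 1).
Proof.
  intros HR Hd. rewrite Eo_iff by auto. rewrite div_lt by auto. split; intros; nra.
Qed.

Lemma Eo_neg Rd s I x y : 0 < Rd -> s * x + (s + I) * y + 1 < 0 ->
  EoAF Rd s I x y = true <->
  thr Rd * ((s + I) * y + 1) < x * (s * s * y - thr Rd * s).
Proof.
  intros HR Hd. rewrite Eo_iff by auto.
  set (d := s * x + (s + I) * y + 1) in *.
  replace (s ^ 2 * x * y / d) with ((- (s ^ 2 * x * y)) / (- d)) by (field; lra).
  rewrite div_lt by lra. unfold d. split; intros; nra.
Qed.

Definition Fin e1 Rd Rs s I y := fun x => exp_pdf e1 x * ind_union Rd Rs s I x y.
Definition bb Rd Rs s I y := thr (Rd - Rs) * (y * I + 1) / s.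
Definition x0 s I y := - ((s + I) * y + 1) / s.
Definition al Rd s y := s * s * y - thr Rd * s.
Definition aa Rd s I y := thr Rd * ((s + I) * y + 1) / al Rd s y.

Lemma same_side u v x m p : u < x < v -> u < m < v -> ~ (u < p < v) ->
  (x < p <-> m < p) /\ (p < x <-> p < m).
Proof. intros; split; split; intros; apply Rnot_le_lt; intro; apply H1; lra. Qed.

Lemma lin_lt x a T : a <> 0 ->
  (x * a < T <-> (0 < a /\ x < T / a) \/ (a < 0 /\ T / a < x)).
Proof.
  intros Ha. destruct (Rlt_dec 0 a).
  - rewrite (div_gt T a x) by auto. split; intros; [left; auto|]. destruct H; [tauto|lra].
  - assert (a < 0) by lra.
    replace (T / a) with ((- T) / (- a)) by (field; auto).
    rewrite (div_lt (- T) (- a) x) by lra. split; intros.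
    + right; split; auto; nra.
    + destruct H0; [lra|nra].
Qed.

Lemma lin_gt x a T : a <> 0 ->
  (T < x * a <-> (0 < a /\ T / a < x) \/ (a < 0 /\ x < T / a)).
Proof.
  intros Ha. destruct (Rlt_dec 0 a).
  - rewrite (div_lt T a x) by auto. split; intros; [left; auto|]. destruct H; [tauto|lra].
  - assert (a < 0) by lra.
    replace (T / a) with ((- T) / (- a)) by (field; auto).
    rewrite (div_gt (- T) (- a) x) by lra. split; intros.
    + right; split; auto; nra.
    + destruct H0; [lra|nra].
Qed.

Lemma ind_const Rd Rs s I y u v : 0 <= Rs -> Rs < Rd -> 0 < s -> 0 < I -> 0 <= y ->
  u < v -> (forall p, In p (bb Rd Rs s I y :: x0 s I y :: aa Rd s I y :: nil) -> ~ (u < p < v)) ->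
  forall x, u < x < v -> ind_union Rd Rs s I x y = ind_union Rd Rs s I ((u + v) / 2) y.
Proof.
  intros HRs HRd Hs HI Hy Huv HL x Hx.
  set (m := (u + v) / 2). assert (Hm : u < m < v) by (unfold m; lra).
  assert (Hb := HL (bb Rd Rs s I y) ltac:(simpl; auto)).
  assert (Hx0 := HL (x0 s I y) ltac:(simpl; auto)).
  assert (Ha := HL (aa Rd s I y) ltac:(simpl; auto)).
  clear HL.
  unfold ind_union.
  assert (HEl : El Rd Rs s I x y = El Rd Rs s I m y).
  { apply Bool.eq_true_iff_eq. rewrite !El_iff by auto.
    destruct (same_side u v x m _ Hx Hm Hb). unfold bb in *. tauto. }
  assert (HEo : EoAF Rd s I x y = EoAF Rd s I m y).
  { apply Bool.eq_true_iff_eq.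
    destruct (same_side u v x m _ Hx Hm Hx0) as [S1 S2].
    destruct (same_side u v x m _ Hx Hm Ha) as [A1 A2].
    unfold x0, aa in *.
    assert (Hdx : forall z, (0 < s * z + (s + I) * y + 1 <-> - ((s + I) * y + 1) / s < z)
                 /\ (s * z + (s + I) * y + 1 < 0 <-> z < - ((s + I) * y + 1) / s)).
    { intros z. rewrite div_lt, div_gt by auto. split; split; intros; nra. }
    assert (Hx0ne : x <> - ((s + I) * y + 1) / s) by (intro; apply Hx0; lra).
    assert (HRd0 : 0 < Rd) by lra. pose proof (thr_pos Rd HRd0) as Ht.
    assert (Hpos : 0 < thr Rd * ((s + I) * y + 1)).
    { apply Rmult_lt_0_compat; auto. nra. }
    destruct (Rlt_dec (- ((s + I) * y + 1) / s) x) as [Hlt|Hlt].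
    - assert (Hm' : - ((s + I) * y + 1) / s < m) by tauto.
      rewrite !Eo_pos by (try lra; apply Hdx; auto).
      destruct (Req_dec (al Rd s y) 0) as [H0|H0].
      + unfold al in H0. rewrite H0, !Rmult_0_r. tauto.
      + unfold al in *. rewrite !lin_lt by auto. tauto.
    - assert (Hlt' : x < - ((s + I) * y + 1) / s) by lra.
      assert (Hm' : m < - ((s + I) * y + 1) / s) by tauto.
      rewrite !Eo_neg by (try lra; apply Hdx; auto).
      destruct (Req_dec (al Rd s y) 0) as [H0|H0].
      + unfold al in H0. rewrite H0, !Rmult_0_r. split; intros; lra.
      + unfold al in *. rewrite !lin_gt by auto. tauto. }
  rewrite HEl, HEo. reflexivity.
Qed.

Lemma exp_pdf_expf e x : 0 < e -> exp_pdf e x = expf (/ e) (/ e) x.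
Proof. intros He. unfold exp_pdf, expf. f_equal. f_equal. field. lra. Qed.

Lemma exp_pdf_cont e x : 0 < e -> continuous (exp_pdf e) x.
Proof.
  intros He. apply (continuous_ext (expf (/ e) (/ e))).
  - intros; symmetry; apply exp_pdf_expf; auto.
  - apply expf_cont.
Qed.

Lemma Fin_good e1 Rd Rs s I y : 0 < e1 -> 0 <= Rs -> Rs < Rd -> 0 < s -> 0 < I -> 0 <= y ->
  goodf (Fin e1 Rd Rs s I y).
Proof.
  intros. apply (goodf_pw _ (bb Rd Rs s I y :: x0 s I y :: aa Rd s I y :: nil)).
  intros u v Huv HL.
  exists (fun x => exp_pdf e1 x * ind_union Rd Rs s I ((u + v) / 2) y). split.
  - intros x. apply (continuous_mult (K:=R_AbsRing)); [apply exp_pdf_cont; auto|apply continuous_const].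
  - intros x Hx. unfold Fin. rewrite (ind_const Rd Rs s I y u v); auto.
Qed.

Definition Aexp e1 Rd s I y :=
  if Rlt_dec 0 (al Rd s y) then exp (- (/ e1 * aa Rd s I y)) else 0.
Definition Bexp e1 Rd Rs s I y := exp (- (/ e1 * bb Rd Rs s I y)).
Definition Sf e1 Rd Rs s I y :=
  1 - ((Aexp e1 Rd s I y - Bexp e1 Rd Rs s I y) + Rabs (Aexp e1 Rd s I y - Bexp e1 Rd Rs s I y)) / 2.

Lemma RInt_Fin1 e1 Rd Rs s I y p q : 0 < e1 -> p <= q ->
  (forall x, p < x < q -> ind_union Rd Rs s I x y = 1) ->
  RInt (Fin e1 Rd Rs s I y) p q = exp (- (/ e1 * p)) - exp (- (/ e1 * q)).
Proof.
  intros He Hpq H.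
  rewrite (RInt_ext _ (expf (/ e1) (/ e1))).
  - rewrite RInt_expf.
    + field_simplify; [reflexivity|lra].
    + apply Rinv_neq_0_compat; lra.
  - rewrite Rmin_left, Rmax_right by lra. intros x Hx.
    unfold Fin. rewrite H by auto. rewrite Rmult_1_r. apply exp_pdf_expf; auto.
Qed.

Lemma RInt_Fin0 e1 Rd Rs s I y p q : p <= q ->
  (forall x, p < x < q -> ind_union Rd Rs s I x y = 0) ->
  RInt (Fin e1 Rd Rs s I y) p q = 0.
Proof.
  intros Hpq H.
  rewrite (RInt_ext _ (fun _ => 0)).
  - rewrite RInt_const. unfold scal; simpl; unfold mult; simpl. apply Rmult_0_r.
  - rewrite Rmin_left, Rmax_right by lra. intros x Hx.
    unfold Fin. rewrite H by auto. apply Rmult_0_r.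
Qed.

Lemma ind_pos_iff Rd Rs s I x y : 0 <= Rs -> Rs < Rd -> 0 < s -> 0 < I -> 0 <= y -> 0 < x ->
  (ind_union Rd Rs s I x y = 1 <->
    x * al Rd s y < thr Rd * ((s + I) * y + 1) \/ bb Rd Rs s I y < x) /\
  (ind_union Rd Rs s I x y = 0 <->
    ~ (x * al Rd s y < thr Rd * ((s + I) * y + 1) \/ bb Rd Rs s I y < x)).
Proof.
  intros. unfold ind_union, al, bb.
  assert (E : (EoAF Rd s I x y || El Rd Rs s I x y)%bool = true <->
     x * (s * s * y - thr Rd * s) < thr Rd * ((s + I) * y + 1) \/ thr (Rd - Rs) * (y * I + 1) / s < x).
  { rewrite Bool.orb_true_iff, Eo_pos, El_iff by (auto; nra). tauto. }
  destruct (EoAF Rd s I x y || El Rd Rs s I x y)%bool; split; split; intros; try tauto; try lra.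
Qed.

Lemma Sf_one D : D <= 0 -> 1 - (D + Rabs D) / 2 = 1.
Proof. intros. rewrite Rabs_left1 by auto. field. Qed.

Lemma Sf_pos D : 0 <= D -> 1 - (D + Rabs D) / 2 = 1 - D.
Proof. intros. rewrite Rabs_right by lra. field. Qed.

Lemma Fin_limit e1 Rd Rs s I y : 0 < e1 -> 0 <= Rs -> Rs < Rd -> 0 < s -> 0 < I -> 0 <= y ->
  int_0_inf (Fin e1 Rd Rs s I y) (Sf e1 Rd Rs s I y).
Proof.
  intros He1 HRs HRd Hs HI Hy.
  pose proof (Fin_good e1 Rd Rs s I y He1 HRs HRd Hs HI Hy) as Hg.
  assert (HT : 0 < thr Rd * ((s + I) * y + 1)).
  { apply Rmult_lt_0_compat; [apply thr_pos; lra|nra]. }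
  assert (Hb : 0 < bb Rd Rs s I y).
  { unfold bb. apply Rdiv_lt_0_compat; auto. apply Rmult_lt_0_compat; [apply thr_pos; lra|nra]. }
  pose proof (ind_pos_iff Rd Rs s I) as Hind.
  assert (Hch : forall p q r, RInt (Fin e1 Rd Rs s I y) p q + RInt (Fin e1 Rd Rs s I y) q r
                  = RInt (Fin e1 Rd Rs s I y) p r).
  { intros. apply (RInt_Chasles (V:=R_CompleteNormedModule)); apply Hg. }
  unfold Sf, Aexp, Bexp.
  destruct (Rlt_dec 0 (al Rd s y)) as [Hal|Hal].
  - assert (Ha : 0 < aa Rd s I y) by (unfold aa; apply Rdiv_lt_0_compat; auto).
    assert (HEo : forall x, x * al Rd s y < thr Rd * ((s + I) * y + 1) <-> x < aa Rd s I y).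
    { intros x. unfold aa. rewrite div_gt by auto. tauto. }
    destruct (Rle_dec (bb Rd Rs s I y) (aa Rd s I y)) as [Hba|Hba].
    + rewrite Sf_one.
      2:{ assert (exp (- (/ e1 * aa Rd s I y)) <= exp (- (/ e1 * bb Rd Rs s I y))).
          { destruct (Req_dec (aa Rd s I y) (bb Rd Rs s I y)) as [->|]; [lra|].
            left. apply exp_increasing. apply Ropp_lt_contravar. apply Rmult_lt_compat_l.
            apply Rinv_0_lt_compat; auto. lra. }
          lra. }
      apply (int_0_inf_closed _ _ 1 (/ e1) (aa Rd s I y)); auto.
      { apply Rinv_0_lt_compat; auto. }
      intros M HM. rewrite <- (Hch 0 (aa Rd s I y) M).
      rewrite (RInt_Fin1 _ _ _ _ _ _ 0 (aa Rd s I y)); auto; [|lra|].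
      2:{ intros x Hx. apply Hind; auto; try lra. left. apply HEo. lra. }
      rewrite (RInt_Fin1 _ _ _ _ _ _ (aa Rd s I y) M); auto.
      2:{ intros x Hx. apply Hind; auto; try lra. }
      rewrite Rmult_0_r, Ropp_0, exp_0; match goal with |- ?a = ?b => change (@eq R a b) end; ring.
    + rewrite Sf_pos.
      2:{ assert (exp (- (/ e1 * bb Rd Rs s I y)) < exp (- (/ e1 * aa Rd s I y))).
          { apply exp_increasing. apply Ropp_lt_contravar. apply Rmult_lt_compat_l.
            apply Rinv_0_lt_compat; auto. lra. }
          lra. }
      apply (int_0_inf_closed _ _ 1 (/ e1) (bb Rd Rs s I y)); auto.
      { apply Rinv_0_lt_compat; auto. }
      intros M HM. rewrite <- (Hch 0 (aa Rd s I y) M).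
      rewrite <- (Hch (aa Rd s I y) (bb Rd Rs s I y) M).
      rewrite (RInt_Fin1 _ _ _ _ _ _ 0 (aa Rd s I y)); auto; [|lra|].
      2:{ intros x Hx. apply Hind; auto; try lra. left. apply HEo. lra. }
      rewrite (RInt_Fin0 _ _ _ _ _ _ (aa Rd s I y) (bb Rd Rs s I y)); [|lra|].
      2:{ intros x Hx. apply Hind; auto; try lra. intros [H1|H1]; [apply HEo in H1|]; lra. }
      rewrite (RInt_Fin1 _ _ _ _ _ _ (bb Rd Rs s I y) M); auto.
      2:{ intros x Hx. apply Hind; auto; try lra. }
      rewrite Rmult_0_r, Ropp_0, exp_0; match goal with |- ?a = ?b => change (@eq R a b) end; ring.
  - rewrite Sf_one by (pose proof (exp_pos (- (/ e1 * bb Rd Rs s I y))); lra).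
    apply (int_0_inf_closed _ _ 1 (/ e1) 0); auto.
    { apply Rinv_0_lt_compat; auto. }
    intros M HM.
    rewrite (RInt_Fin1 _ _ _ _ _ _ 0 M); auto.
    2:{ intros x Hx. apply Hind; auto; try lra. left. nra. }
    rewrite Rmult_0_r, Ropp_0, exp_0; match goal with |- ?a = ?b => change (@eq R a b) end; ring.
Qed.

Lemma locally_R (P : R -> Prop) x eps : 0 < eps ->
  (forall z, Rabs (z - x) < eps -> P z) -> locally x P.
Proof.
  intros He H. exists (mkposreal eps He). intros z Hz. apply H.
  change (Rabs (z - x) < eps) in Hz. exact Hz.
Qed.

Lemma cpt_cont f x : continuity_pt f x -> continuous f x.
Proof. intros H. apply continuity_pt_filterlim. exact H. Qed.
Lemma cont_cpt f x : continuous f x -> continuity_pt f x.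
Proof. intros H. apply continuity_pt_filterlim. exact H. Qed.

Lemma exp_neg_lt t : 0 < t -> exp (- t) < / t.
Proof.
  intros Ht. rewrite exp_Ropp. apply Rinv_lt_contravar.
  - apply Rmult_lt_0_compat; auto. apply exp_pos.
  - assert (1 + t < exp t) by (apply exp_ineq1; lra). lra.
Qed.

Lemma Aexp_cont e1 Rd s I y : 0 < e1 -> 0 < Rd -> 0 < s -> 0 < I ->
  continuity_pt (Aexp e1 Rd s I) y.
Proof.
  intros He1 HRd Hs HI. pose proof (thr_pos Rd HRd) as Ht.
  unfold Aexp.
  destruct (Rtotal_order (al Rd s y) 0) as [Hneg|[Hz|Hpos]].
  - apply cont_cpt. apply (continuous_ext_loc _ (fun _ => 0)).
    + apply (locally_R _ _ (- al Rd s y / (s * s))).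
      { apply Rdiv_lt_0_compat; nra. }
      intros z Hz. destruct (Rlt_dec 0 (al Rd s z)); auto.
      exfalso. rewrite div_gt in Hz by nra.
      pose proof (Rle_abs (z - y)). pose proof (Rle_abs (- (z - y))). rewrite Rabs_Ropp in *.
      unfold al in *. nra.
    + apply continuous_const.
  - unfold continuity_pt, continue_in, limit1_in, limit_in, D_x, no_cond; simpl. unfold R_dist.
    intros eps Heps.
    exists (eps * thr Rd / (e1 * s * s)). split.
    { apply Rdiv_lt_0_compat; [nra|]. apply Rmult_lt_0_compat; nra. }
    intros z [_ Hzd].
    destruct (Rlt_dec 0 (al Rd s y)) as [|_]; [lra|].
    destruct (Rlt_dec 0 (al Rd s z)) as [Hp|Hp].
    2:{ rewrite Rminus_0_r, Rabs_R0. lra. }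
    rewrite Rminus_0_r, Rabs_right by (left; apply exp_pos).
    unfold al in Hz, Hp.
    assert (Hyz : y < z) by nra.
    assert (Hy0 : 0 < y) by nra.
    assert (HA : 0 < aa Rd s I z).
    { unfold aa, al. apply Rdiv_lt_0_compat; [|exact Hp]. apply Rmult_lt_0_compat; [auto|nra]. }
    assert (H1 : 0 < / e1 * aa Rd s I z) by (apply Rmult_lt_0_compat; auto; apply Rinv_0_lt_compat; auto).
    eapply Rlt_trans; [apply exp_neg_lt; auto|].
    (* / (/e1 * aa) = e1 * al / T <= e1 * s*s*(z-y) / thr < eps *)
    unfold aa, al.
    assert (HT : thr Rd <= thr Rd * ((s + I) * z + 1)).
    { assert (0 <= (s + I) * z) by nra. nra. }
    replace (/ (/ e1 * (thr Rd * ((s + I) * z + 1) / (s * s * z - thr Rd * s))))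
      with (e1 * (s * s * (z - y)) / (thr Rd * ((s + I) * z + 1))).
    2:{ replace (s * s * z - thr Rd * s) with (s * s * (z - y)) by nra.
        field. repeat split; nra. }
    apply Rabs_def2 in Hzd. destruct Hzd as [Hzd _].
    rewrite div_gt in Hzd by (apply Rmult_lt_0_compat; nra).
    apply div_lt; [nra|].
    assert (0 <= eps * (thr Rd * ((s + I) * z + 1) - thr Rd)) by (apply Rmult_le_pos; lra).
    nra.
  - apply cont_cpt.
    apply (continuous_ext_loc _ (fun z => exp (- (/ e1 * aa Rd s I z)))).
    + apply (locally_R _ _ (al Rd s y / (s * s))).
      { apply Rdiv_lt_0_compat; nra. }
      intros z Hz. destruct (Rlt_dec 0 (al Rd s z)); auto.
      exfalso. rewrite div_gt in Hz by nra.
      pose proof (Rle_abs (z - y)). pose proof (Rle_abs (- (z - y))). rewrite Rabs_Ropp in *.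
      unfold al in *. nra.
    + apply (ex_derive_continuous (V:=R_NormedModule)). unfold aa, al. unfold al in Hpos.
      auto_derive. apply Rgt_not_eq. exact Hpos.
Qed.

Lemma Bexp_cont e1 Rd Rs s I y : 0 < s -> continuity_pt (Bexp e1 Rd Rs s I) y.
Proof.
  intros Hs. apply cont_cpt. apply (ex_derive_continuous (V:=R_NormedModule)).
  unfold Bexp, bb. auto_derive. lra.
Qed.

Lemma Sf_cont e1 Rd Rs s I y : 0 < e1 -> 0 < Rd -> 0 < s -> 0 < I ->
  continuity_pt (Sf e1 Rd Rs s I) y.
Proof.
  intros. unfold Sf.
  set (D := fun z => Aexp e1 Rd s I z - Bexp e1 Rd Rs s I z).
  assert (HD : continuity_pt D y).
  { apply continuity_pt_minus; [apply Aexp_cont|apply Bexp_cont]; auto. }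
  change (continuity_pt (fun z => 1 - (D z + Rabs (D z)) / 2) y).
  apply continuity_pt_minus; [apply continuity_pt_const; intros ? ?; reflexivity|].
  unfold Rdiv.
  apply (continuity_pt_mult (fun z => D z + Rabs (D z)) (fun _ => / 2));
    [|apply continuity_pt_const; intros ? ?; reflexivity].
  apply continuity_pt_plus; auto.
  apply (continuity_pt_comp D Rabs); auto. apply Rcontinuity_abs.
Qed.

Lemma Sf_facts D A B : 0 <= A <= 1 -> 0 <= B <= 1 -> D = A - B ->
  let S := 1 - (D + Rabs D) / 2 in
  0 <= S <= 1 /\ S <= 1 - A + B /\ 1 - A <= S /\ B <= S.
Proof.
  intros HA HB HD S. unfold S. destruct (Rcase_abs D) as [h|h].
  - rewrite Rabs_left by auto. lra.
  - rewrite Rabs_right by auto. lra.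
Qed.

Lemma Aexp_range e1 Rd s I y : 0 < e1 -> 0 < Rd -> 0 < s -> 0 < I -> 0 <= Aexp e1 Rd s I y <= 1.
Proof.
  intros He HRd Hs HI. pose proof (thr_pos Rd HRd). unfold Aexp.
  destruct (Rlt_dec 0 (al Rd s y)) as [Hal|]; [|lra].
  assert (0 < y) by (unfold al in Hal; nra).
  assert (0 < aa Rd s I y).
  { unfold aa. apply Rdiv_lt_0_compat; auto. apply Rmult_lt_0_compat; auto. nra. }
  split; [left; apply exp_pos|].
  rewrite <- exp_0. destruct (Req_dec 0 0); [|lra].
  left. apply exp_increasing. assert (0 < / e1 * aa Rd s I y) by (apply Rmult_lt_0_compat; auto; apply Rinv_0_lt_compat; auto). lra.
Qed.

Lemma Bexp_range e1 Rd Rs s I y : 0 < e1 -> 0 <= Rs -> Rs < Rd -> 0 < s -> 0 < I -> 0 <= y ->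
  0 <= Bexp e1 Rd Rs s I y <= 1.
Proof.
  intros He HRs HRd Hs HI Hy. pose proof (thr_pos (Rd - Rs) ltac:(lra)). unfold Bexp.
  assert (0 <= bb Rd Rs s I y).
  { unfold bb. left. apply Rdiv_lt_0_compat; auto. apply Rmult_lt_0_compat; auto. nra. }
  split; [left; apply exp_pos|].
  rewrite <- exp_0. assert (0 <= / e1 * bb Rd Rs s I y) by (apply Rmult_le_pos; auto; left; apply Rinv_0_lt_compat; auto).
  destruct (Req_dec (/ e1 * bb Rd Rs s I y) 0) as [E|E].
  - rewrite E, Ropp_0. lra.
  - left. apply exp_increasing. lra.
Qed.

Lemma Sf_props e1 Rd Rs s I y : 0 < e1 -> 0 <= Rs -> Rs < Rd -> 0 < s -> 0 < I -> 0 <= y ->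
  let S := Sf e1 Rd Rs s I y in
  let A := Aexp e1 Rd s I y in let B := Bexp e1 Rd Rs s I y in
  0 <= S <= 1 /\ S <= 1 - A + B /\ 1 - A <= S /\ B <= S.
Proof.
  intros. apply Sf_facts; auto.
  - apply Aexp_range; auto; lra.
  - apply Bexp_range; auto.
Qed.

Definition Gout e1 e2 Rd Rs s I := fun y => exp_pdf e2 y * Sf e1 Rd Rs s I y.

Lemma part1_fixed e1 e2 Rd Rs s I : 0 < e1 -> 0 < e2 -> 0 <= Rs -> Rs < Rd -> 0 < s -> 0 < I ->
  exists p, ProbAF e1 e2 Rd Rs s I p.
Proof.
  intros He1 He2 HRs HRd Hs HI.
  assert (Hg : goodf (Gout e1 e2 Rd Rs s I)).
  { apply goodf_cont. intros x. apply cpt_cont. unfold Gout.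
    apply (continuity_pt_mult (exp_pdf e2) (Sf e1 Rd Rs s I)).
    - apply cont_cpt, exp_pdf_cont; auto.
    - apply Sf_cont; auto; lra. }
  assert (Hpos : forall x, 0 < x -> 0 <= Gout e1 e2 Rd Rs s I x).
  { intros x Hx. unfold Gout. apply Rmult_le_pos.
    - rewrite exp_pdf_expf by auto. unfold expf. left. apply Rmult_lt_0_compat; [apply Rinv_0_lt_compat; auto|apply exp_pos].
    - destruct (Sf_props e1 Rd Rs s I x) as [[? ?] _]; auto; lra. }
  destruct (int_0_inf_lub (Gout e1 e2 Rd Rs s I) 1 Hg Hpos) as [l Hl].
  { intros M HM.
    eapply Rle_trans.
    - apply (RInt_le _ (expf (/ e2) (/ e2))); auto.
      + apply goodf_cont, expf_cont.
      + intros x Hx. unfold Gout. rewrite exp_pdf_expf by auto.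
        destruct (Sf_props e1 Rd Rs s I x) as [[? ?] _]; auto; try lra.
        assert (0 < expf (/ e2) (/ e2) x).
        { unfold expf. apply Rmult_lt_0_compat; [apply Rinv_0_lt_compat; auto|apply exp_pos]. }
        nra.
    - rewrite RInt_expf by (apply Rinv_neq_0_compat; lra).
      rewrite Rmult_0_r, Ropp_0, exp_0.
      replace (/ e2 / / e2) with 1 by (field; lra).
      pose proof (exp_pos (- (/ e2 * M))). lra. }
  exists l. exists (Sf e1 Rd Rs s I). split.
  - intros y Hy. apply (Fin_limit e1 Rd Rs s I y); auto.
  - exact Hl.
Qed.

Lemma part1 e1 e2 Rd Rs rho : 0 < e1 -> 0 < e2 -> 0 <= Rs -> Rs < Rd ->
  exists pt : R -> R, forall snr : R, 0 < snr ->
     ProbAF e1 e2 Rd Rs snr (Rpower snr rho) (pt snr).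
Proof.
  intros.
  assert (H3 : forall snr, exists p, 0 < snr -> ProbAF e1 e2 Rd Rs snr (Rpower snr rho) p).
  { intros snr. destruct (Rlt_dec 0 snr) as [h|h].
    - destruct (part1_fixed e1 e2 Rd Rs snr (Rpower snr rho)) as [p Hp]; auto.
      { unfold Rpower. apply exp_pos. }
      exists p; auto.
    - exists 0. intros; contradiction. }
  exists (fun snr => proj1_sig (constructive_indefinite_description _ (H3 snr))).
  intros snr Hs. destruct (constructive_indefinite_description _ (H3 snr)) as [p Hp]. simpl. auto.
Qed.

Lemma exp_mono a b : a <= b -> exp a <= exp b.
Proof. intros [H|H]; [left; apply exp_increasing; auto|subst; lra]. Qed.

Lemma exp_ge_1m t : 1 - t <= exp (- t).
Proof.
  destruct (Req_dec t 0) as [->|H]. { rewrite Ropp_0, exp_0. lra. }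
  assert (1 + - t < exp (- t)) by (apply exp_ineq1; lra). lra.
Qed.

Lemma pdf_pos e x : 0 < e -> 0 < exp_pdf e x.
Proof. intros. unfold exp_pdf. apply Rmult_lt_0_compat; [apply Rinv_0_lt_compat; auto|apply exp_pos]. Qed.

Lemma probAF_bounds e1 e2 Rd Rs s I p :
  0 < e1 -> 0 < e2 -> 0 <= Rs -> Rs < Rd -> 0 < s -> 0 < I ->
  ProbAF e1 e2 Rd Rs s I p ->
  let c' := thr (Rd - Rs) in let c := thr Rd in
  let k1 := / e2 * exp (- (/ e1 * (c' / s))) in
  let lam1 := / e2 + / e1 * c' * I / s in
  let K := (2 * c * (s + I) / (s * s) + 1 / s) / e1 in
  k1 / lam1 <= p /\
  1 - exp (- (/ e1 * (c * I / (s * s)))) <= p /\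
  p <= K + / e2 * exp 1 / (/ e2 + s / (2 * c)) + k1 / lam1 /\
  p <= 1.
Proof.
  intros He1 He2 HRs HRd Hs HI [s' [Hin Hout]] c' c k1 lam1 K.
  assert (Ec' : c' = thr (Rd - Rs)) by reflexivity.
  assert (Ec : c = thr Rd) by reflexivity.
  assert (Ek1 : k1 = / e2 * exp (- (/ e1 * (c' / s)))) by reflexivity.
  assert (Elam1 : lam1 = / e2 + / e1 * c' * I / s) by reflexivity.
  assert (EK : K = (2 * c * (s + I) / (s * s) + 1 / s) / e1) by reflexivity.
  clearbody c' c k1 lam1 K.
  assert (Hc' : 0 < c') by (rewrite Ec'; apply thr_pos; lra).
  assert (Hc : 0 < c) by (rewrite Ec; apply thr_pos; lra).
  assert (Hss : forall y, 0 <= y -> s' y = Sf e1 Rd Rs s I y).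
  { intros y Hy. apply (int_0_inf_unique (Fin e1 Rd Rs s I y)).
    - apply Hin; auto.
    - apply Fin_limit; auto. }
  assert (Hpdf : forall y, exp_pdf e2 y = expf (/ e2) (/ e2) y) by (intros; apply exp_pdf_expf; auto).
  assert (Hlam1 : 0 < lam1).
  { rewrite Elam1. assert (0 < / e1 * c' * I / s).
    { apply Rdiv_lt_0_compat; auto. repeat apply Rmult_lt_0_compat; auto. apply Rinv_0_lt_compat; auto. }
    pose proof (Rinv_0_lt_compat e2 He2). lra. }
  assert (HB : forall y, exp_pdf e2 y * Bexp e1 Rd Rs s I y = expf k1 lam1 y).
  { intros y. rewrite Hpdf. unfold expf, Bexp, bb. rewrite Ek1, Elam1, <- Ec'.
    rewrite Rmult_assoc, <- !exp_plus. rewrite (Rmult_assoc (/ e2) (exp _)), <- exp_plus. f_equal. f_equal. field. split; lra. }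
  repeat split.
  -
    apply (int_0_inf_le (expf k1 lam1) (fun y => exp_pdf e2 y * s' y)); auto.
    + apply int_expf; auto.
    + intros x Hx. rewrite <- HB, Hss by lra.
      destruct (Sf_props e1 Rd Rs s I x) as [_ [_ [_ H4]]]; auto; try lra.
      apply Rmult_le_compat_l; auto. left; apply pdf_pos; auto.
  -
    remember (1 - exp (- (/ e1 * (c * I / (s * s))))) as c0 eqn:Ec0.
    replace c0 with ((/ e2 * c0) / (/ e2)) by (field; lra).
    apply (int_0_inf_le (expf (/ e2 * c0) (/ e2)) (fun y => exp_pdf e2 y * s' y)); auto.
    + apply int_expf; apply Rinv_0_lt_compat; auto.
    + intros x Hx. rewrite Hss by lra.
      replace (expf (/ e2 * c0) (/ e2) x) with (exp_pdf e2 x * c0) by (rewrite Hpdf; unfold expf; ring).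
      apply Rmult_le_compat_l; [left; apply pdf_pos; auto|].
      destruct (Sf_props e1 Rd Rs s I x) as [_ [_ [H3 _]]]; auto; try lra.
      eapply Rle_trans; [|exact H3]. rewrite Ec0.
      assert (Aexp e1 Rd s I x <= exp (- (/ e1 * (c * I / (s * s))))); [|lra].
      unfold Aexp. destruct (Rlt_dec 0 (al Rd s x)) as [Hal|]; [|left; apply exp_pos].
      apply exp_mono. apply Ropp_le_contravar. apply Rmult_le_compat_l; [left; apply Rinv_0_lt_compat; auto|].
      unfold aa, al in *. rewrite <- Ec in *.
      apply Rmult_le_reg_r with (s * s * (s * s * x - c * s)); [apply Rmult_lt_0_compat; [nra|exact Hal]|].
      replace (c * ((s + I) * x + 1) / (s * s * x - c * s) * (s * s * (s * s * x - c * s)))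
        with (c * ((s + I) * x + 1) * (s * s)) by (field; lra).
      replace (c * I / (s * s) * (s * s * (s * s * x - c * s))) with (c * I * (s * s * x - c * s))
        by (field; lra).
      assert (0 <= x) by lra.
      assert (E : c * ((s + I) * x + 1) * (s * s) - c * I * (s * s * x - c * s)
                  = c * s * s * s * x + c * s * s + c * c * I * s) by ring.
      assert (0 <= c * s * s * s * x) by (repeat apply Rmult_le_pos; lra).
      assert (0 <= c * s * s) by (repeat apply Rmult_le_pos; lra).
      assert (0 <= c * c * I * s) by (repeat apply Rmult_le_pos; lra).
      lra.
  -
    remember (/ e2 * exp 1) as k2 eqn:Ek2. remember (/ e2 + s / (2 * c)) as lam2 eqn:Elam2.
    assert (Hlam2 : 0 < lam2).
    { rewrite Elam2. assert (0 < s / (2 * c)) by (apply Rdiv_lt_0_compat; lra).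
      pose proof (Rinv_0_lt_compat e2 He2). lra. }
    assert (HK : 0 <= K).
    { rewrite EK. apply Rmult_le_pos; [|left; apply Rinv_0_lt_compat; auto].
      assert (0 <= 2 * c * (s + I) / (s * s)) by (left; apply Rdiv_lt_0_compat; nra).
      assert (0 <= 1 / s) by (left; apply Rdiv_lt_0_compat; lra). lra. }
    replace (K + k2 / lam2 + k1 / lam1) with ((/ e2 * K) / (/ e2) + k2 / lam2 + k1 / lam1)
      by (field; repeat split; lra).
    apply (int_0_inf_le (fun y => exp_pdf e2 y * s' y)
             (fun y => (expf (/ e2 * K) (/ e2) y + expf k2 lam2 y) + expf k1 lam1 y)); auto.
    + apply int_0_inf_plus; [apply int_0_inf_plus|]; apply int_expf; auto.
      apply Rinv_0_lt_compat; auto.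
    + intros x Hx. rewrite Hss by lra. rewrite <- HB.
      replace (expf (/ e2 * K) (/ e2) x) with (exp_pdf e2 x * K) by (rewrite Hpdf; unfold expf; ring).
      replace (expf k2 lam2 x) with (exp_pdf e2 x * exp (1 - x * s / (2 * c))).
      2:{ rewrite Hpdf. unfold expf. rewrite Ek2, Elam2. rewrite Rmult_assoc, <- exp_plus, Rmult_assoc, <- exp_plus.
          f_equal. f_equal. field. split; lra. }
      rewrite <- !Rmult_plus_distr_l.
      apply Rmult_le_compat_l; [left; apply pdf_pos; auto|].
      destruct (Sf_props e1 Rd Rs s I x) as [[_ H1] [H2 _]]; auto; try lra.
      eapply Rle_trans; [exact H2|].
      assert (1 - Aexp e1 Rd s I x <= K + exp (1 - x * s / (2 * c))); [|lra].
      destruct (Rlt_dec x (2 * c / s)) as [Hx2|Hx2].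
      * assert (1 <= exp (1 - x * s / (2 * c))).
        { apply Rle_trans with (exp 0); [rewrite exp_0; lra|]. apply exp_mono. apply (Rmult_lt_compat_r s) in Hx2; auto.
          replace (2 * c / s * s) with (2 * c) in Hx2 by (field; lra).
          assert (x * s / (2 * c) <= 1); [|lra].
          apply Rmult_le_reg_r with (2 * c); [lra|]. replace (x * s / (2 * c) * (2 * c)) with (x * s) by (field; lra). lra. }
        pose proof (Aexp_range e1 Rd s I x He1 ltac:(lra) Hs HI). lra.
      * assert (Hxs : 2 * c <= x * s).
        { apply Rnot_lt_le in Hx2. apply (Rmult_le_compat_r s) in Hx2; [|lra].
          replace (2 * c / s * s) with (2 * c) in Hx2 by (field; lra). lra. }
        assert (Hal : 0 < al Rd s x) by (unfold al; rewrite <- Ec; nra).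
        unfold Aexp. destruct (Rlt_dec 0 (al Rd s x)); [|lra].
        pose proof (exp_ge_1m (/ e1 * aa Rd s I x)).
        pose proof (exp_pos (1 - x * s / (2 * c))).
        assert (/ e1 * aa Rd s I x <= K); [|lra].
        rewrite EK. rewrite (Rmult_comm (/ e1)). apply Rmult_le_compat_r; [left; apply Rinv_0_lt_compat; auto|].
        unfold aa, al in *. rewrite <- Ec in *.
        assert (Hx0 : 0 < x) by nra.
        assert (Hd : s * s * x / 2 <= s * s * x - c * s) by nra.
        apply Rle_trans with (c * ((s + I) * x + 1) / (s * s * x / 2)).
        { assert (0 < s * s * x) by (repeat apply Rmult_lt_0_compat; lra).
          assert (0 <= (s + I) * x) by (apply Rmult_le_pos; lra).
          unfold Rdiv. apply Rmult_le_compat_l; [apply Rmult_le_pos; lra|]. apply Rinv_le_contravar; lra. }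
        replace (c * ((s + I) * x + 1) / (s * s * x / 2)) with (2 * c * (s + I) / (s * s) + 2 * c / (s * s * x))
          by (field; split; lra).
        assert (2 * c / (s * s * x) <= 1 / s); [|lra].
        apply Rmult_le_reg_r with (s * s * x); [nra|].
        replace (2 * c / (s * s * x) * (s * s * x)) with (2 * c) by (field; split; lra).
        replace (1 / s * (s * s * x)) with (x * s) by (field; lra). lra.
  -
    replace 1 with (/ e2 / / e2) by (field; lra).
    apply (int_0_inf_le (fun y => exp_pdf e2 y * s' y) (expf (/ e2) (/ e2))); auto.
    + apply int_expf. apply Rinv_0_lt_compat; auto.
    + intros x Hx. rewrite Hss by lra. rewrite <- Hpdf.
      destruct (Sf_props e1 Rd Rs s I x) as [[_ H1] _]; auto; try lra.
      pose proof (pdf_pos e2 x He2). nra.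
Qed.

Lemma ln_gt_of_exp a s : exp a < s -> a < ln s.
Proof. intros H. rewrite <- (ln_exp a). apply ln_increasing; auto. apply exp_pos. Qed.

Lemma limsup_from_bounds (p : R -> R) d k C : 0 < k -> 0 < C ->
  (forall s, 1 < s -> k * exp (- (d * ln s)) <= p s <= C * exp (- (d * ln s))) ->
  limsup_infty (fun s => - ln (p s) / ln s) d.
Proof.
  intros Hk HC H e He.
  assert (Hb : forall s, 1 < s ->
     d - Rabs (ln C) / ln s <= - ln (p s) / ln s <= d + Rabs (ln k) / ln s).
  { intros s Hs. assert (HL : 0 < ln s) by (rewrite <- ln_1; apply ln_increasing; lra).
    destruct (H s Hs) as [H1 H2].
    assert (Hp : 0 < p s) by (pose proof (exp_pos (- (d * ln s))); nra).
    assert (E1 : ln (k * exp (- (d * ln s))) = ln k - d * ln s)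
      by (rewrite ln_mult, ln_exp by (auto; apply exp_pos); ring).
    assert (E2 : ln (C * exp (- (d * ln s))) = ln C - d * ln s)
      by (rewrite ln_mult, ln_exp by (auto; apply exp_pos); ring).
    assert (L1 : ln k - d * ln s <= ln (p s)).
    { rewrite <- E1. destruct H1 as [H1|H1]; [left; apply ln_increasing; auto|rewrite H1; lra].
      apply Rmult_lt_0_compat; auto; apply exp_pos. }
    assert (L2 : ln (p s) <= ln C - d * ln s).
    { rewrite <- E2. destruct H2 as [H2|H2]; [left; apply ln_increasing; auto|rewrite H2; lra]. }
    pose proof (Rle_abs (ln C)). pose proof (Rle_abs (- ln k)). rewrite Rabs_Ropp in *.
    split.
    - apply Rmult_le_reg_r with (ln s); auto.
      replace ((d - Rabs (ln C) / ln s) * ln s) with (d * ln s - Rabs (ln C)) by (field; apply Rgt_not_eq; exact HL).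
      replace (- ln (p s) / ln s * ln s) with (- ln (p s)) by (field; apply Rgt_not_eq; exact HL). lra.
    - apply Rmult_le_reg_r with (ln s); auto.
      replace ((d + Rabs (ln k) / ln s) * ln s) with (d * ln s + Rabs (ln k)) by (field; apply Rgt_not_eq; exact HL).
      replace (- ln (p s) / ln s * ln s) with (- ln (p s)) by (field; apply Rgt_not_eq; exact HL). lra. }
  split.
  - exists (Rmax 1 (exp (Rabs (ln k) / e))). intros s Hs.
    assert (Hs1 : 1 < s) by (eapply Rle_lt_trans; [apply Rmax_l|exact Hs]).
    assert (Hs2 : exp (Rabs (ln k) / e) < s) by (eapply Rle_lt_trans; [apply Rmax_r|exact Hs]).
    apply ln_gt_of_exp in Hs2.
    assert (HL : 0 < ln s) by (rewrite <- ln_1; apply ln_increasing; lra).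
    destruct (Hb s Hs1) as [_ Hu].
    assert (Rabs (ln k) / ln s < e); [|lra].
    apply div_lt; auto. rewrite div_lt in Hs2 by auto. lra.
  - intros X. set (s := Rmax X (Rmax 1 (exp (Rabs (ln C) / e))) + 1).
    assert (HX : X < s) by (unfold s; pose proof (Rmax_l X (Rmax 1 (exp (Rabs (ln C) / e)))); lra).
    assert (Hs1 : 1 < s).
    { unfold s. pose proof (Rmax_r X (Rmax 1 (exp (Rabs (ln C) / e)))).
      pose proof (Rmax_l 1 (exp (Rabs (ln C) / e))). lra. }
    assert (Hs2 : exp (Rabs (ln C) / e) < s).
    { unfold s. pose proof (Rmax_r X (Rmax 1 (exp (Rabs (ln C) / e)))).
      pose proof (Rmax_r 1 (exp (Rabs (ln C) / e))). lra. }
    clearbody s.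
    exists s. split; auto.
    apply ln_gt_of_exp in Hs2.
    assert (HL : 0 < ln s) by (rewrite <- ln_1; apply ln_increasing; lra).
    destruct (Hb s Hs1) as [Hl _].
    assert (Rabs (ln C) / ln s < e); [|lra].
    apply div_lt; auto. rewrite div_lt in Hs2 by auto. lra.
Qed.

Lemma pt_bounds_L e1 e2 Rd Rs rho s p : 0 < e1 -> 0 < e2 -> 0 <= Rs -> Rs < Rd -> 1 < s ->
  ProbAF e1 e2 Rd Rs s (Rpower s rho) p ->
  let L := ln s in let c' := thr (Rd - Rs) in let c := thr Rd in
  (/ e2 * exp (- (c' / e1))) / (/ e2 + c' / e1 * exp ((rho - 1) * L)) <= p /\
  1 - exp (- (c / e1 * exp ((rho - 2) * L))) <= p /\
  p <= (2 * c / e1 + 1 / e1 + 2 * c * exp 1 / e2 + e1 / (e2 * c'))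
        * (exp (- L) + exp ((rho - 2) * L) + exp ((1 - rho) * L)) /\
  p <= 1.
Proof.
  intros He1 He2 HRs HRd Hs HP L c' c.
  assert (Ec' : c' = thr (Rd - Rs)) by reflexivity.
  assert (Ec : c = thr Rd) by reflexivity.
  assert (EL : L = ln s) by reflexivity.
  clearbody L c' c.
  assert (Hc' : 0 < c') by (rewrite Ec'; apply thr_pos; lra).
  assert (Hc : 0 < c) by (rewrite Ec; apply thr_pos; lra).
  set (I := Rpower s rho) in *.
  assert (EI : I = exp (rho * L)) by (unfold I, Rpower; rewrite EL; reflexivity).
  clearbody I.
  assert (HI : 0 < I) by (rewrite EI; apply exp_pos).
  assert (HsL : s = exp L) by (rewrite EL, exp_ln; lra).
  assert (H1 : exp (- L) = / s) by (rewrite exp_Ropp, HsL; reflexivity).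
  assert (H2 : exp ((rho - 2) * L) = I / (s * s)).
  { replace ((rho - 2) * L) with (rho * L + - L + - L) by ring.
    rewrite !exp_plus, H1, EI. field. lra. }
  assert (H3 : exp ((1 - rho) * L) = s / I).
  { replace ((1 - rho) * L) with (L + - (rho * L)) by ring.
    rewrite exp_plus, exp_Ropp, <- EI, <- HsL. reflexivity. }
  assert (H4 : exp ((rho - 1) * L) = I / s).
  { replace ((rho - 1) * L) with (rho * L + - L) by ring.
    rewrite exp_plus, H1, <- EI. reflexivity. }
  destruct (probAF_bounds e1 e2 Rd Rs s I p He1 He2 HRs HRd ltac:(lra) HI HP)
    as [B1 [B2 [B3 B4]]].
  rewrite <- Ec', <- Ec in *.
  rewrite H1, H2, H3, H4.
  assert (Hlam : 0 < / e2 + c' / e1 * (I / s)).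
  { assert (0 < c' / e1 * (I / s)) by (apply Rmult_lt_0_compat; apply Rdiv_lt_0_compat; lra).
    pose proof (Rinv_0_lt_compat e2 He2). lra. }
  assert (Ek : / e2 + / e1 * c' * I / s = / e2 + c' / e1 * (I / s)) by (field; split; lra).
  rewrite Ek in B1, B3.
  assert (Hk1 : / e2 * exp (- (c' / e1)) <= / e2 * exp (- (/ e1 * (c' / s)))).
  { apply Rmult_le_compat_l; [left; apply Rinv_0_lt_compat; auto|].
    apply exp_mono. apply Ropp_le_contravar.
    replace (c' / e1) with (/ e1 * c') by (field; lra).
    apply Rmult_le_compat_l; [left; apply Rinv_0_lt_compat; auto|].
    apply Rmult_le_reg_r with s; [lra|]. replace (c' / s * s) with c' by (field; lra). nra. }
  repeat split.
  - eapply Rle_trans; [|exact B1].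
    unfold Rdiv. apply Rmult_le_compat_r; [left; apply Rinv_0_lt_compat; auto|exact Hk1].
  - replace (c / e1 * (I / (s * s))) with (/ e1 * (c * I / (s * s))) by (field; split; lra). exact B2.
  - eapply Rle_trans; [exact B3|].
    set (C1 := 2 * c / e1 + 1 / e1 + 2 * c * exp 1 / e2 + e1 / (e2 * c')).
    assert (T1 : (2 * c * (s + I) / (s * s) + 1 / s) / e1
                 = (2 * c / e1) * (I / (s * s)) + (2 * c / e1 + 1 / e1) * / s) by (field; split; lra).
    assert (T2 : / e2 * exp 1 / (/ e2 + s / (2 * c)) <= (2 * c * exp 1 / e2) * / s).
    { assert (0 < s / (2 * c)) by (apply Rdiv_lt_0_compat; lra).
      pose proof (Rinv_0_lt_compat e2 He2). pose proof (exp_pos 1).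
      unfold Rdiv at 1. apply Rle_trans with (/ e2 * exp 1 * / (s / (2 * c))).
      - apply Rmult_le_compat_l; [apply Rmult_le_pos; lra|]. apply Rinv_le_contravar; lra.
      - right. field. repeat split; lra. }
    assert (T3 : / e2 * exp (- (/ e1 * (c' / s))) / (/ e2 + c' / e1 * (I / s)) <= e1 / (e2 * c') * (s / I)).
    { assert (0 < c' / e1 * (I / s)) by (apply Rmult_lt_0_compat; apply Rdiv_lt_0_compat; lra).
      pose proof (Rinv_0_lt_compat e2 He2).
      assert (exp (- (/ e1 * (c' / s))) <= 1).
      { rewrite <- exp_0. apply exp_mono.
        assert (0 <= / e1 * (c' / s)) by (apply Rmult_le_pos; [left; apply Rinv_0_lt_compat|left; apply Rdiv_lt_0_compat]; lra).
        lra. }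
      apply Rle_trans with (/ e2 * 1 / (c' / e1 * (I / s))).
      - unfold Rdiv. apply Rmult_le_compat; try (left; apply Rinv_0_lt_compat; lra).
        + apply Rmult_le_pos; [lra|left; apply exp_pos].
        + apply Rmult_le_compat_l; lra.
        + apply Rinv_le_contravar; lra.
      - right. field. repeat split; lra. }
    rewrite T1.
    assert (P1 : 0 < / s) by (apply Rinv_0_lt_compat; lra).
    assert (P2 : 0 < I / (s * s)) by (apply Rdiv_lt_0_compat; nra).
    assert (P3 : 0 < s / I) by (apply Rdiv_lt_0_compat; lra).
    assert (Q1 : 0 < 2 * c / e1) by (apply Rdiv_lt_0_compat; lra).
    assert (Q2 : 0 < 1 / e1) by (apply Rdiv_lt_0_compat; lra).
    assert (Q3 : 0 < 2 * c * exp 1 / e2) by (apply Rdiv_lt_0_compat; [pose proof (exp_pos 1); nra|lra]).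
    assert (Q4 : 0 < e1 / (e2 * c')) by (apply Rdiv_lt_0_compat; nra).
    assert (C1a : 2 * c / e1 <= C1) by (unfold C1; lra).
    assert (C1b : 2 * c / e1 + 1 / e1 + 2 * c * exp 1 / e2 <= C1) by (unfold C1; lra).
    assert (C1c : e1 / (e2 * c') <= C1) by (unfold C1; lra).
    clearbody C1.
    assert (2 * c / e1 * (I / (s * s)) <= C1 * (I / (s * s))) by (apply Rmult_le_compat_r; lra).
    assert ((2 * c / e1 + 1 / e1) * / s + 2 * c * exp 1 / e2 * / s <= C1 * / s).
    { rewrite <- Rmult_plus_distr_r. apply Rmult_le_compat_r; lra. }
    assert (e1 / (e2 * c') * (s / I) <= C1 * (s / I)) by (apply Rmult_le_compat_r; lra).
    lra.
  - exact B4.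
Qed.

Lemma expL_mono a b L : 0 < L -> a <= b -> exp (a * L) <= exp (b * L).
Proof. intros. apply exp_mono. nra. Qed.

Lemma exp_le1 a L : 0 < L -> a <= 0 -> exp (a * L) <= 1.
Proof. intros. rewrite <- exp_0. apply exp_mono. nra. Qed.
Lemma exp_ge1 a L : 0 < L -> 0 <= a -> 1 <= exp (a * L).
Proof. intros. rewrite <- exp_0. apply exp_mono. nra. Qed.

Lemma one_m_exp k : 0 <= k -> k * exp (- k) <= 1 - exp (- k).
Proof.
  intros Hk. assert (1 + k <= exp k).
  { destruct (Req_dec k 0) as [->|]; [rewrite exp_0; lra|left; apply exp_ineq1; auto]. }
  rewrite exp_Ropp. pose proof (exp_pos k).
  apply Rmult_le_reg_r with (exp k); auto.
  replace (k * / exp k * exp k) with k by (field; lra).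
  replace ((1 - / exp k) * exp k) with (exp k - 1) by (field; lra). lra.
Qed.

Theorem mainTheorem8 (e1 e2 Rd Rs rho : R)
  (He1 : 0 < e1) (He2 : 0 < e2) (HRs : 0 <= Rs) (HRd : Rs < Rd) (Hrho : 0 <= rho) :
  (exists pt : R -> R, forall snr : R, 0 < snr ->
     ProbAF e1 e2 Rd Rs snr (Rpower snr rho) (pt snr)) /\
  (forall pt : R -> R,
     (forall snr : R, 0 < snr -> ProbAF e1 e2 Rd Rs snr (Rpower snr rho) (pt snr)) ->
     limsup_infty (fun snr => - ln (pt snr) / ln snr) (sdg_AF rho)).
Proof.
  split; [apply part1; auto|].
  intros pt Hpt.
  assert (HB : forall s, 1 < s ->
    (/ e2 * exp (- (thr (Rd - Rs) / e1))) / (/ e2 + thr (Rd - Rs) / e1 * exp ((rho - 1) * ln s)) <= pt s /\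
    1 - exp (- (thr Rd / e1 * exp ((rho - 2) * ln s))) <= pt s /\
    pt s <= (2 * thr Rd / e1 + 1 / e1 + 2 * thr Rd * exp 1 / e2 + e1 / (e2 * thr (Rd - Rs)))
        * (exp (- ln s) + exp ((rho - 2) * ln s) + exp ((1 - rho) * ln s)) /\
    pt s <= 1).
  { intros s Hs. pose proof (pt_bounds_L e1 e2 Rd Rs rho s (pt s)) as H.
    cbv zeta in H. apply H; auto. apply Hpt. lra. }
  set (c' := thr (Rd - Rs)) in *. set (c := thr Rd) in *.
  assert (Hc' : 0 < c') by (apply thr_pos; lra).
  assert (Hc : 0 < c) by (apply thr_pos; lra).
  set (C1 := 2 * c / e1 + 1 / e1 + 2 * c * exp 1 / e2 + e1 / (e2 * c')) in *.
  assert (HC1 : 0 < C1).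
  { unfold C1.
    assert (0 < 2 * c / e1) by (apply Rdiv_lt_0_compat; lra).
    assert (0 < 1 / e1) by (apply Rdiv_lt_0_compat; lra).
    assert (0 < 2 * c * exp 1 / e2) by (apply Rdiv_lt_0_compat; [pose proof (exp_pos 1); nra|lra]).
    assert (0 < e1 / (e2 * c')) by (apply Rdiv_lt_0_compat; nra). lra. }
  set (num := / e2 * exp (- (c' / e1))) in *.
  assert (Hnum : 0 < num) by (unfold num; apply Rmult_lt_0_compat; [apply Rinv_0_lt_compat; auto|apply exp_pos]).
  assert (Hden : 0 < / e2 + c' / e1).
  { assert (0 < c' / e1) by (apply Rdiv_lt_0_compat; lra). pose proof (Rinv_0_lt_compat e2 He2). lra. }
  clearbody c' c C1 num.
  assert (HL : forall s, 1 < s -> 0 < ln s) by (intros; rewrite <- ln_1; apply ln_increasing; lra).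
  unfold sdg_AF.
  destruct (Rle_dec rho 1) as [H1|H1]; [|destruct (Rle_dec rho (3/2)) as [H2|H2];
    [|destruct (Rle_dec rho 2) as [H3|H3]]].
  -
    apply (limsup_from_bounds _ 0 (num / (/ e2 + c' / e1)) 1).
    { apply Rdiv_lt_0_compat; auto. } { lra. }
    intros s Hs. specialize (HL s Hs). destruct (HB s Hs) as [B1 [_ [_ B4]]].
    replace (- (0 * ln s)) with 0 by ring. rewrite exp_0, !Rmult_1_r.
    split; [|auto].
    eapply Rle_trans; [|exact B1].
    assert (E : exp ((rho - 1) * ln s) <= 1).
    { apply exp_le1; lra. }
    assert (0 < exp ((rho - 1) * ln s)) by apply exp_pos.
    assert (0 < c' / e1) by (apply Rdiv_lt_0_compat; lra).
    unfold Rdiv at 1 3. apply Rmult_le_compat_l; [lra|].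
    apply Rinv_le_contravar.
    + pose proof (Rinv_0_lt_compat e2 He2). nra.
    + nra.
  -
    apply (limsup_from_bounds _ (rho - 1) (num / (/ e2 + c' / e1)) (3 * C1)).
    { apply Rdiv_lt_0_compat; auto. } { lra. }
    intros s Hs. specialize (HL s Hs). destruct (HB s Hs) as [B1 [_ [B3 _]]].
    split.
    + eapply Rle_trans; [|exact B1].
      set (E := exp ((rho - 1) * ln s)).
      assert (HE : 1 <= E).
      { unfold E. apply exp_ge1; lra. }
      assert (EE : exp (- ((rho - 1) * ln s)) = / E) by (unfold E; apply exp_Ropp).
      rewrite EE. clearbody E.
      assert (0 < c' / e1) by (apply Rdiv_lt_0_compat; lra).
      pose proof (Rinv_0_lt_compat e2 He2).
      replace (num / (/ e2 + c' / e1) * / E) with (num / ((/ e2 + c' / e1) * E)) . 2:{ field. assert (0 < c' * e2) by (apply Rmult_lt_0_compat; lra). repeat split; apply Rgt_not_eq; lra. }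
      unfold Rdiv. apply Rmult_le_compat_l; [lra|].
      apply Rinv_le_contravar; nra.
    + eapply Rle_trans; [exact B3|].
      assert (exp (- ln s) <= exp (- ((rho - 1) * ln s))).
      { replace (- ln s) with ((-1) * ln s) by ring.
        replace (- ((rho - 1) * ln s)) with ((1 - rho) * ln s) by ring. apply expL_mono; lra. }
      assert (exp ((rho - 2) * ln s) <= exp (- ((rho - 1) * ln s))).
      { replace (- ((rho - 1) * ln s)) with ((1 - rho) * ln s) by ring. apply expL_mono; lra. }
      replace (exp ((1 - rho) * ln s)) with (exp (- ((rho - 1) * ln s))) by (f_equal; ring).
      apply Rmult_le_compat_l with (r := C1) in H; [|lra].
      apply Rmult_le_compat_l with (r := C1) in H0; [|lra].
      lra.
  -
    apply (limsup_from_bounds _ (2 - rho) (c / e1 * exp (- (c / e1))) (3 * C1)).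
    { apply Rmult_lt_0_compat; [apply Rdiv_lt_0_compat; lra|apply exp_pos]. } { lra. }
    intros s Hs. specialize (HL s Hs). destruct (HB s Hs) as [_ [B2 [B3 _]]].
    split.
    + eapply Rle_trans; [|exact B2].
      set (E := exp ((rho - 2) * ln s)).
      assert (HE : E <= 1).
      { unfold E. apply exp_le1; lra. }
      assert (HE0 : 0 < E) by apply exp_pos.
      assert (EE : exp (- ((2 - rho) * ln s)) = E) by (unfold E; f_equal; ring).
      rewrite EE. clearbody E.
      assert (Hk : 0 < c / e1) by (apply Rdiv_lt_0_compat; lra).
      eapply Rle_trans; [|apply one_m_exp; nra].
      assert (exp (- (c / e1)) <= exp (- (c / e1 * E))) by (apply exp_mono; nra).
      replace (c / e1 * exp (- (c / e1)) * E) with ((c / e1 * E) * exp (- (c / e1))) by ring.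
      apply Rmult_le_compat_l; [apply Rmult_le_pos; lra|exact H].
    + eapply Rle_trans; [exact B3|].
      assert (exp (- ln s) <= exp (- ((2 - rho) * ln s))).
      { replace (- ln s) with ((-1) * ln s) by ring.
        replace (- ((2 - rho) * ln s)) with ((rho - 2) * ln s) by ring. apply expL_mono; lra. }
      assert (exp ((1 - rho) * ln s) <= exp (- ((2 - rho) * ln s))).
      { replace (- ((2 - rho) * ln s)) with ((rho - 2) * ln s) by ring. apply expL_mono; lra. }
      replace (exp ((rho - 2) * ln s)) with (exp (- ((2 - rho) * ln s))) by (f_equal; ring).
      apply Rmult_le_compat_l with (r := C1) in H; [|lra].
      apply Rmult_le_compat_l with (r := C1) in H0; [|lra].
      lra.
  -
    apply (limsup_from_bounds _ 0 (1 - exp (- (c / e1))) 1).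
    { assert (Hk : 0 < c / e1) by (apply Rdiv_lt_0_compat; lra).
      assert (exp (- (c / e1)) < exp 0) by (apply exp_increasing; lra). rewrite exp_0 in H. lra. }
    { lra. }
    intros s Hs. specialize (HL s Hs). destruct (HB s Hs) as [_ [B2 [_ B4]]].
    replace (- (0 * ln s)) with 0 by ring. rewrite exp_0, !Rmult_1_r.
    split; [|auto].
    eapply Rle_trans; [|exact B2].
    assert (E : 1 <= exp ((rho - 2) * ln s)).
    { apply exp_ge1; lra. }
    assert (Hk : 0 < c / e1) by (apply Rdiv_lt_0_compat; lra).
    assert (exp (- (c / e1 * exp ((rho - 2) * ln s))) <= exp (- (c / e1))) by (apply exp_mono; nra).
    lra.
Qed.
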